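(* For every $\lambda\in H$, where $H=\{\lambda\in B_{1/\sqrt2}(0):\ \mathrm{Re}(\lambda)>0,\ \mathrm{Im}(\lambda)>0\}\setminus B_{2/3}(1/3)$, we have $B_{1/2}(0)\subset A_\lambda\{-1,0,1\}$.
   Context: $B_r(z_0)$ is the open disc of radius $r$ centered at $z_0$. For $\lambda\in\mathbb C$ with $|\lambda|<1$, $A_\lambda\{-1,0,1\}=\{\sum_{n\ge0}a_n\lambda^n: a_n\in\{-1,0,1\}\}$, the attractor of the iterated function system $\{\lambda z-1,\lambda z,\lambda z+1\}$. *)

(* Defs.v *)
From Stdlib Require Import Reals.
From Coquelicot Require Import Coquelicot.
From Coquelicot Require Complex.

Open Scope R_scope.

Definition Cx := Complex.C.

Definition open_disc (z0 : Cx) (r : R) (z : Cx) : Prop :=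
  Complex.Cmod (Complex.Cminus z z0) < r.

Definition attractor (lam : Cx) (z : Cx) : Prop :=
  exists a : nat -> Z,
    (forall n, (a n = -1 \/ a n = 0 \/ a n = 1)%Z) /\
    is_series (fun n => Complex.Cmult (Complex.RtoC (IZR (a n))) (Complex.Cpow lam n)) z.

Definition regionH (lam : Cx) : Prop :=
  open_disc (Complex.RtoC 0) (1 / sqrt 2) lam /\
  0 < Complex.Re lam /\ 0 < Complex.Im lam /\
  ~ open_disc (Complex.RtoC (1/3)) (2/3) lam.

(* Main.v *)
Require Import Defs.
From Stdlib Require Import Reals.
From Coquelicot Require Import Coquelicot.
From Stdlib Require Import Lra Psatz.
Open Scope R_scope.

Section Proof.
Variables u v : R.
Let lam : C := (u, v).
Let r2 := u^2 + v^2.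
Let d := 1 / (2 * r2).

Definition chooseA (x : R) : Z :=
  if Rlt_dec x (-1/2) then (-1)%Z else if Rle_dec x (1/2) then 0%Z else 1%Z.

Definition stepS (s : R * R) : R * R :=
  let a := IZR (chooseA (fst s)) in
  ((fst s - a) * (2 * u / r2) + snd s, - (fst s - a) / r2).

Definition wS (s : R * R) : C := Cplus (RtoC (fst s)) (Cmult (RtoC (snd s)) lam).

Lemma key (s : R * R) : r2 <> 0 ->
  wS s = Cplus (RtoC (IZR (chooseA (fst s)))) (Cmult lam (wS (stepS s))).
Proof.
  intros H. destruct s as [x y]. unfold wS, stepS, lam, Cplus, Cmult, RtoC; simpl.
  unfold r2 in *. f_equal; field; auto.
Qed.

Lemma chooseA_spec x : -3/2 <= x <= 3/2 ->
  -1/2 <= x - IZR (chooseA x) <= 1/2.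
Proof.
  intros H. unfold chooseA.
  destruct (Rlt_dec x (-1/2)); [|destruct (Rle_dec x (1/2))]; simpl; lra.
Qed.

Lemma step_inv (s : R * R) : 0 < u -> 0 < r2 -> 2*u+1 <= 3*r2 ->
  -3/2 <= fst s <= 3/2 -> -d <= snd s <= d ->
  -3/2 <= fst (stepS s) <= 3/2 /\ -d <= snd (stepS s) <= d.
Proof.
  intros Hu Hr Hc Hx Hy. pose proof (chooseA_spec _ Hx) as Ha.
  destruct s as [x y]; unfold stepS; simpl in *.
  set (e := x - IZR (chooseA x)) in *.
  unfold d in *.
  assert (E1: - e / r2 = (-e) * (1/r2)) by (field; lra).
  assert (E2: e * (2*u/r2) = (e*2*u) * (1/r2)) by (field; lra).
  assert (Hi: 0 < 1/r2) by (apply Rdiv_lt_0_compat; lra).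
  assert (E3: 1/(2*r2) = (1/2)*(1/r2)) by (field; lra).
  rewrite E1, E2. rewrite E3 in *.
  set (t := 1/r2) in *.
  assert (Ht: r2 * t = 1) by (unfold t; field; lra).
  assert (B: (2*u+1)*t <= 3*r2*t) by (apply Rmult_le_compat_r; lra).
  rewrite Rmult_assoc, Ht in B.
  assert (B1: -(u*t) <= e*2*u*t <= u*t).
  { assert (0 <= u*t) by nra. split; nra. }
  split; split; nra.
Qed.

End Proof.

Fixpoint stS u v (s0 : R * R) (n : nat) : R * R :=
  match n with O => s0 | S n => stepS u v (stS u v s0 n) end.

Lemma Cmm (a b : C) : Cminus (Cminus a b) a = Copp b.
Proof. ring. Qed.

Lemma base_eq (L w0 w1 a : C) : w0 = Cplus a (Cmult L w1) ->
  Cmult a (Cpow L 0) = Cminus w0 (Cmult (Cpow L 1) w1).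
Proof. intros ->. rewrite Cpow_1_r. change (Cpow L 0) with (RtoC 1). ring. Qed.

Lemma step_eq (L Z0 w1 w2 a : C) (N : nat) : w1 = Cplus a (Cmult L w2) ->
  Cplus (Cminus Z0 (Cmult (Cpow L (S N)) w1)) (Cmult a (Cpow L (S N)))
  = Cminus Z0 (Cmult (Cmult L (Cpow L (S N))) w2).
Proof. intros ->. ring. Qed.

Lemma sq2 a b : 0 <= a*(a*1) + b*(b*1).
Proof. rewrite !Rmult_1_r. apply Rplus_le_le_0_compat; apply Rle_0_sqr. Qed.

Lemma sqrt_lt_sq a c : 0 <= a -> 0 <= c -> sqrt a < c -> a < c * c.
Proof.
  intros Ha Hc H. pose proof (sqrt_sqrt a Ha). pose proof (sqrt_pos a). nra.
Qed.

Lemma sqrt_ge_sq a c : ~ sqrt a < c -> 0 <= a -> 0 <= c -> c * c <= a.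
Proof.
  intros H Ha Hc. pose proof (sqrt_sqrt a Ha). pose proof (sqrt_pos a). nra.
Qed.

Theorem mainTheorem3 : forall lam : Cx, regionH lam ->
  forall z : Cx, open_disc (Complex.RtoC 0) (1/2) z -> attractor lam z.
Proof.
  intros [u v] [H1 [H2 [H3 H4]]] [zr zi] Hz.
  unfold open_disc, Cmod, Cminus, Cplus, Copp, RtoC in H1, H4, Hz.
  simpl in H1, H2, H3, H4, Hz.
  assert (S2: sqrt 2 * sqrt 2 = 2) by (apply sqrt_sqrt; lra).
  assert (S2p: 0 < sqrt 2) by (apply sqrt_lt_R0; lra).
  apply sqrt_lt_sq in H1; [| apply sq2 | apply Rlt_le, Rdiv_lt_0_compat; lra].
  replace (1 / sqrt 2 * (1 / sqrt 2)) with (1 / (sqrt 2 * sqrt 2)) in H1 by (field; lra).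
  rewrite S2 in H1.
  pose proof (sqrt_ge_sq _ _ H4 (sq2 _ _) ltac:(lra)) as H4'. clear H4.
  apply sqrt_lt_sq in Hz; [| apply sq2 | lra].
  set (r2 := u^2 + v^2).
  assert (Hr2 : r2 < 1/2) by (unfold r2; nra).
  assert (Hc : 2*u+1 <= 3*r2) by (unfold r2; nra).
  assert (Hr0 : 0 < r2) by (unfold r2; nra).
  assert (Hs3 : 1/3 <= r2) by lra.
  assert (Hu4 : u < 1/4) by lra.
  assert (Hv2 : r2 * r2 <= v * v).
  { assert (v*v = r2 - u*u) by (unfold r2; ring).
    assert (u*u <= ((3*r2-1)/2)*((3*r2-1)/2)) by nra. nra. }
  assert (Hvr : r2 <= v) by nra.
  assert (Huv : u <= v) by lra.
  assert (Hzr : -1/2 < zr < 1/2) by nra.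
  assert (Hzi : -1/2 < zi < 1/2) by nra.
  set (s0 := (zr - u*zi/v, zi/v)).
  set (st := stS u v s0).
  exists (fun n => chooseA (fst (st n))).
  split.
  { intros n. unfold chooseA. destruct (Rlt_dec _ _); [|destruct (Rle_dec _ _)]; auto. }
  set (d := 1 / (2 * (u^2+v^2))).
  assert (Inv : forall n, -3/2 <= fst (st n) <= 3/2 /\ -d <= snd (st n) <= d).
  { induction n as [|n [IH1 IH2]].
    - simpl. unfold s0; simpl.
      set (iv := 1/v). set (ir := 1/r2).
      assert (E1 : u*zi/v = (u*iv)*zi) by (unfold iv; field; lra).
      assert (E2 : zi/v = zi*iv) by (unfold iv; field; lra).
      assert (E3 : d = (1/2)*ir) by (unfold d, ir, r2; field; lra).
      assert (Hiv : iv <= ir) by (unfold iv, ir; rewrite !Rdiv_1_l; apply Rinv_le_contravar; lra).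
      assert (Hiv0 : 0 < iv) by (unfold iv; apply Rdiv_lt_0_compat; lra).
      assert (Huiv : u*iv <= 1) by (replace 1 with (v*iv) by (unfold iv; field; lra); nra).
      rewrite E1, E2, E3. split; split; nra.
    - simpl. apply step_inv; auto. }
  set (M := 3/2 + d + 1).
  assert (HM : 0 < M).
  { unfold M, d. assert (0 < 1/(2*(u^2+v^2))) by (apply Rdiv_lt_0_compat; nra). lra. }
  assert (Hr0' : u^2 + v^2 <> 0) by (fold r2; lra).
  assert (Hz0 : ((zr, zi) : C) = wS u v s0).
  { unfold wS, s0, Cplus, Cmult, RtoC; simpl. f_equal; field; lra. }
  assert (PS : forall N, sum_n (fun n => Cmult (RtoC (IZR (chooseA (fst (st n))))) (Cpow (u,v) n)) N
     = Cminus (zr, zi) (Cmult (Cpow (u,v) (S N)) (wS u v (st (S N))))).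
  { induction N as [|N IH].
    - rewrite sum_O. rewrite Hz0. change s0 with (st O).
      apply base_eq. apply key. exact Hr0'.
    - rewrite sum_Sn, IH. change (plus ?a ?b) with (Cplus a b).
      rewrite (Cpow_S _ (S N)). apply step_eq.
      change (st (S (S N))) with (stepS u v (st (S N))). apply key. exact Hr0'. }
  assert (Hlam : Cmod (u,v) < 1).
  { unfold Cmod; simpl. apply Rlt_le_trans with (sqrt 1); [|rewrite sqrt_1; lra]. apply sqrt_lt_1; [apply sq2|lra|]. unfold r2 in Hr2; simpl in Hr2; lra. }
  assert (Hw : forall n, Cmod (wS u v (st n)) <= M).
  { intros n. destruct (Inv n) as [I1 I2]. unfold wS.
    eapply Rle_trans; [apply Cmod_triangle|].
    rewrite Cmod_mult, !Cmod_R.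
    assert (Rabs (fst (st n)) <= 3/2) by (apply Rabs_le; lra).
    assert (Rabs (snd (st n)) <= d) by (apply Rabs_le; lra).
    pose proof (Rabs_pos (snd (st n))). pose proof (Cmod_ge_0 (u,v)).
    unfold M. nra. }
  unfold is_series. apply filterlim_locally_ball_norm. intros eps.
  destruct (pow_lt_1_zero (Cmod (u,v))) with (y := eps / M) as [N0 HN0].
  { rewrite Rabs_pos_eq; auto. apply Cmod_ge_0. }
  { apply Rdiv_lt_0_compat; auto. apply cond_pos. }
  exists N0. intros n Hn. unfold ball_norm.
  rewrite PS. change (norm ?x) with (Cmod x). change (minus ?a ?b) with (Cminus a b).
  rewrite Cmm.
  rewrite Cmod_opp, Cmod_mult, Cmod_pow.
  specialize (HN0 (S n) ltac:(lia)).
  rewrite Rabs_pos_eq in HN0 by (apply pow_le, Cmod_ge_0).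
  pose proof (Hw (S n)). pose proof (pow_le (Cmod (u,v)) (S n) (Cmod_ge_0 _)).
  pose proof (cond_pos eps).
  assert (eps / M * M = eps) by (field; lra).
  pose proof (Cmod_ge_0 (wS u v (st (S n)))).
  nra.
Qed.
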